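(* Let $X_1,\dots,X_k$ be i.i.d. $C_0$-bounded random variables on $[0,L]$, and for $x\in[0,L]$ let $Y(x)=\min_{1\le j\le k}|x-X_j|$. Then $$\min_{0\le x\le L}\mathbf E\big(Y(x)\big)\ge\frac{1}{2C_0(k+1)}.$$
   Context: A real random variable $X$ is $C_0$-bounded (on $[0,L]$) if its cumulative distribution function $F$ equals $0$ on $(-\infty,0)$, $1$ on $(L,\infty)$, and $\varphi$ on $[0,L]$, where $\varphi$ is continuous and weakly differentiable on $[0,L]$ with $\varphi(0)=0$, $\varphi(L)=1$ and $\|\varphi'\|_{L_\infty([0,L])}\le C_0$. *)

(* Defs.v *)
From Stdlib Require Import Reals List.
Open Scope R_scope.

Fixpoint rsum (f : nat -> R) (n : nat) : R :=
  match n with O => 0 | S m => rsum f m + f m end.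

Definition gridpt (L : R) (N m : nat) : R := INR m * L / INR N.

(* Riemann--Stieltjes sum, on the uniform N^k grid of [0,L]^k (left tags),
   of g against the product of k copies of the law with CDF phi:
     sum_{i_1..i_k < N} g(a_{i_1},..,a_{i_k}) * prod_j (phi a_{i_j+1} - phi a_{i_j}). *)
Fixpoint stieltjes_sum (L : R) (phi : R -> R) (N : nat) (k : nat)
    (g : list R -> R) : R :=
  match k with
  | O => g nil
  | S k' => rsum (fun m =>
       (phi (gridpt L N (S m)) - phi (gridpt L N m)) *
       stieltjes_sum L phi N k' (fun l => g (gridpt L N m :: l))) N
  end.

(* E g(X_1,..,X_k) for X_j i.i.d. with CDF phi supported on [0,L] and g
   continuous is the limit of these sums (N = n+1 cells). *)
Definition iid_expect_seq (L : R) (phi : R -> R) (k : nat)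
    (g : list R -> R) : nat -> R :=
  fun n => stieltjes_sum L phi (S n) k g.

(* Y(x) = min_j |x - X_j| (value on the empty list irrelevant, k >= 1) *)
Definition Ymin (x : R) (l : list R) : R :=
  match l with
  | nil => 0
  | y :: l' => fold_left (fun acc z => Rmin acc (Rabs (x - z))) l' (Rabs (x - y))
  end.

(* Main.v *)
Require Import Defs.
From Stdlib Require Import Reals List Lra Lia Psatz FunctionalExtensionality.
Open Scope R_scope.

Lemma rsum_ext f g n : (forall m, (m < n)%nat -> f m = g m) -> rsum f n = rsum g n.
Proof. induction n; simpl; intros H; [reflexivity|].
  rewrite IHn by (intros; apply H; lia). rewrite H by lia. reflexivity. Qed.

Lemma rsum_le f g n : (forall m, (m < n)%nat -> f m <= g m) -> rsum f n <= rsum g n.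
Proof. induction n; simpl; intros H; [lra|].
  assert (f n <= g n) by (apply H; lia).
  assert (rsum f n <= rsum g n) by (apply IHn; intros; apply H; lia). lra. Qed.

Lemma rsum_plus f g n : rsum (fun m => f m + g m) n = rsum f n + rsum g n.
Proof. induction n; simpl; [lra|]. rewrite IHn; lra. Qed.

Lemma rsum_minus f g n : rsum (fun m => f m - g m) n = rsum f n - rsum g n.
Proof. induction n; simpl; [lra|]. rewrite IHn; lra. Qed.

Lemma rsum_scal c f n : rsum (fun m => c * f m) n = c * rsum f n.
Proof. induction n; simpl; [lra|]. rewrite IHn; lra. Qed.

Lemma rsum_const c n : rsum (fun _ => c) n = INR n * c.
Proof. induction n; simpl rsum; [simpl; lra|]. rewrite IHn, S_INR; lra. Qed.

Lemma rsum_tele f n : rsum (fun m => f (S m) - f m) n = f n - f O.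
Proof. induction n; simpl; [lra|]. rewrite IHn; lra. Qed.

Lemma rsum_tele' f n : rsum (fun m => f m - f (S m)) n = f O - f n.
Proof. induction n; simpl; [lra|]. rewrite IHn; lra. Qed.

Lemma rsum_nonneg f n : (forall m, (m<n)%nat -> 0 <= f m) -> 0 <= rsum f n.
Proof. intros H. replace 0 with (rsum (fun _ => 0) n).
  apply rsum_le; auto. rewrite rsum_const; lra. Qed.

Lemma ss_plus L phi N k g1 g2 :
  stieltjes_sum L phi N k (fun l => g1 l + g2 l) =
  stieltjes_sum L phi N k g1 + stieltjes_sum L phi N k g2.
Proof. revert g1 g2; induction k; intros g1 g2; simpl; [reflexivity|].
  rewrite <- rsum_plus. apply rsum_ext; intros m _. rewrite IHk. ring. Qed.

Lemma ss_scal L phi N k c g :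
  stieltjes_sum L phi N k (fun l => c * g l) = c * stieltjes_sum L phi N k g.
Proof. revert g; induction k; intros g; simpl; [reflexivity|].
  rewrite <- rsum_scal. apply rsum_ext; intros m _. rewrite IHk. ring. Qed.

Lemma ss_zero L phi N k : stieltjes_sum L phi N k (fun _ => 0) = 0.
Proof. replace (fun _ : list R => 0) with (fun l : list R => 0 * 0) by
  (apply functional_extensionality; intros; ring).
  rewrite ss_scal; ring. Qed.

Lemma ss_rsum L phi N k G n :
  stieltjes_sum L phi N k (fun l => rsum (fun i => G i l) n) =
  rsum (fun i => stieltjes_sum L phi N k (G i)) n.
Proof. induction n; simpl.
  - apply ss_zero.
  - rewrite ss_plus, IHn. reflexivity. Qed.

Lemma ss_mono L phi N k g g' :
  (forall m, (m < N)%nat -> 0 <= phi (gridpt L N (S m)) - phi (gridpt L N m)) ->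
  (forall l, length l = k -> g l <= g' l) ->
  stieltjes_sum L phi N k g <= stieltjes_sum L phi N k g'.
Proof. intros Hp. revert g g'; induction k; intros g g' H; simpl.
  - apply H; reflexivity.
  - apply rsum_le; intros m Hm. apply Rmult_le_compat_l; [auto|].
    apply IHk. intros l Hl. apply H. simpl; lia. Qed.

Definition prodl (f : R -> R) (l : list R) : R := fold_right (fun y acc => f y * acc) 1 l.

Lemma ss_prod L phi N k f :
  stieltjes_sum L phi N k (prodl f) =
  (rsum (fun m => (phi (gridpt L N (S m)) - phi (gridpt L N m)) * f (gridpt L N m)) N) ^ k.
Proof. induction k; simpl; [reflexivity|].
  rewrite Rmult_comm, <- rsum_scal. apply rsum_ext; intros m _.
  change (fun l => prodl f (gridpt L N m :: l)) with (fun l => f (gridpt L N m) * prodl f l).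
  rewrite ss_scal. change (fun l => prodl f l) with (prodl f). rewrite IHk. ring. Qed.

Lemma fold_min_ge x t : forall l acc, t <= acc -> (forall y, In y l -> t <= Rabs (x - y)) ->
  t <= fold_left (fun acc z => Rmin acc (Rabs (x - z))) l acc.
Proof. induction l as [|y l IH]; intros acc Ha Hl; simpl; auto.
  apply IH. apply Rmin_glb; auto. apply Hl; simpl; auto.
  intros; apply Hl; simpl; auto. Qed.

Definition indic (t x y : R) : R := if Rle_dec t (Rabs (x - y)) then 1 else 0.

Lemma prodl_ind t x : forall l, prodl (indic t x) l = 0 \/
  (prodl (indic t x) l = 1 /\ forall y, In y l -> t <= Rabs (x - y)).
Proof. induction l as [|y l IH].
  - right; split; [reflexivity| simpl; tauto].
  - change (prodl (indic t x) (y::l)) with (indic t x y * prodl (indic t x) l). destruct (Rle_dec t (Rabs (x - y))) as [r|r];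
      [assert (E: indic t x y = 1) by (unfold indic; destruct Rle_dec; tauto)
      |assert (E: indic t x y = 0) by (unfold indic; destruct Rle_dec; tauto)]; rewrite E.
    + destruct IH as [H|[H1 H2]]; [left; rewrite H; ring|].
      right; split; [rewrite H1; ring|]. intros z [<-|Hz]; auto.
    + left; ring. Qed.

Lemma Ymin_nonneg x l : l <> nil -> 0 <= Ymin x l.
Proof. destruct l as [|y l]; [tauto|]. intros _. simpl.
  apply fold_min_ge; [apply Rabs_pos|]. intros; apply Rabs_pos. Qed.

Lemma prodl_ind_le t x l : l <> nil ->
  prodl (indic t x) l <= if Rle_dec t (Ymin x l) then 1 else 0.
Proof. intros Hne. destruct (prodl_ind t x l) as [H|[H1 H2]].
  - rewrite H. destruct Rle_dec; lra.
  - rewrite H1. destruct Rle_dec as [|n]; [lra|]. exfalso; apply n.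
    destruct l as [|y l]; [tauto|]. simpl. apply fold_min_ge.
    apply H2; simpl; auto. intros; apply H2; simpl; auto. Qed.

Lemma layer_cake y d n : 0 < d -> 0 <= y ->
  d * rsum (fun m => if Rle_dec (INR (S m) * d) y then 1 else 0) n <= Rmin y (INR n * d).
Proof. intros Hd Hy. induction n.
  - simpl. unfold Rmin; destruct Rle_dec; lra.
  - change (rsum ?f (S n)) with (rsum f n + f n). cbv beta.
    rewrite (S_INR n). destruct Rle_dec as [r|r]; try rewrite S_INR in r.
    + assert (Rmin y (INR n * d) <= INR n * d) by apply Rmin_r.
      apply Rmin_glb; lra.
    + assert (Rmin y (INR n * d) <= Rmin y ((INR n + 1) * d)).
      { unfold Rmin; destruct Rle_dec; destruct Rle_dec; lra. }
      lra. Qed.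

Lemma Ymin_lb x l d P : l <> nil -> 0 < d ->
  d * rsum (fun m => prodl (indic (INR (S m) * d) x) l) P <= Ymin x l.
Proof. intros Hne Hd.
  apply Rle_trans with (d * rsum (fun m => if Rle_dec (INR (S m) * d) (Ymin x l) then 1 else 0) P).
  - apply Rmult_le_compat_l; [lra|]. apply rsum_le; intros; apply prodl_ind_le; auto.
  - eapply Rle_trans; [apply layer_cake; auto; apply Ymin_nonneg; auto|]. apply Rmin_l. Qed.

Lemma pow_diff a b n : 0 <= b <= a -> a ^ (S n) - b ^ (S n) <= INR (S n) * a ^ n * (a - b).
Proof. intros Hab. induction n.
  - simpl; lra.
  - change (a ^ S (S n)) with (a * a ^ (S n)). change (b ^ S (S n)) with (b * b ^ (S n)).
    rewrite (S_INR (S n)).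
    assert (Hb : b ^ S n <= a ^ S n) by (apply pow_incr; lra).
    assert (Hb0 : 0 <= b ^ S n) by (apply pow_le; lra).
    assert (a * (a ^ S n - b ^ S n) <= a * (INR (S n) * a ^ n * (a - b)))
      by (apply Rmult_le_compat_l; lra).
    assert ((a - b) * b ^ S n <= (a - b) * a ^ S n) by (apply Rmult_le_compat_l; lra).
    change (a ^ S n) with (a * a ^ n) in *. nra. Qed.

Lemma pow_le1 a n : 0 <= a <= 1 -> a ^ n <= 1.
Proof. intros. rewrite <- (pow1 n). apply pow_incr; lra. Qed.

Lemma pow_lb q a e k : (1 <= k)%nat -> 0 <= a <= 1 -> 0 <= e -> 0 <= q -> a - e <= q ->
  a ^ k - INR k * e <= q ^ k.
Proof. intros Hk Ha He Hq Hqa. destruct k as [|k]; [lia|].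
  assert (HI : 1 <= INR (S k)) by (apply (le_INR 1); lia).
  assert (Hak : a ^ k <= 1) by (apply pow_le1; lra).
  destruct (Rle_or_lt (a - e) 0) as [H|H].
  - assert (a ^ S k <= a) by (change (a ^ S k) with (a * a ^ k); assert (0 <= a ^ k) by (apply pow_le; lra); nra).
    assert (0 <= q ^ S k) by (apply pow_le; lra). nra.
  - assert ((a - e) ^ S k <= q ^ S k) by (apply pow_incr; lra).
    assert (Hd : a ^ S k - (a - e) ^ S k <= INR (S k) * a ^ k * (a - (a - e))) by (apply pow_diff; lra).
    assert (0 <= a ^ k) by (apply pow_le; lra).
    replace (a - (a - e)) with e in Hd by ring.
    assert (INR (S k) * a ^ k * e <= INR (S k) * e).
    { rewrite Rmult_assoc. apply Rmult_le_compat_l; [lra|]. nra. }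
    lra. Qed.

Lemma lb_lim u l B K : Un_cv u l -> 0 <= K -> (forall n, B - K / INR (S n) <= u n) -> B <= l.
Proof. intros Hu HK Hb. destruct (Rle_or_lt B l) as [|Hlt]; auto. exfalso.
  set (e := (B - l) / 2). assert (He : e > 0) by (unfold e; lra).
  destruct (Hu e He) as [N0 HN0]. destruct (INR_archimed e K He) as [n0 Hn0].
  specialize (HN0 (N0 + n0)%nat ltac:(lia)). unfold R_dist in HN0.
  specialize (Hb (N0 + n0)%nat).
  assert (INR n0 <= INR (S (N0 + n0))) by (apply le_INR; lia).
  assert (HS : 0 < INR (S (N0 + n0))) by (apply lt_0_INR; lia).
  assert (K / INR (S (N0 + n0)) < e).
  { apply Rmult_lt_reg_r with (INR (S (N0 + n0))); auto. unfold Rdiv.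
    rewrite Rmult_assoc, Rinv_l by lra. nra. }
  apply Rabs_def2 in HN0. unfold e in *. lra. Qed.

Lemma grid_S L N m : (0 < N)%nat -> gridpt L N (S m) = gridpt L N m + L / INR N.
Proof. intros HN. assert (0 < INR N) by (apply lt_0_INR; lia).
  unfold gridpt. rewrite S_INR. field. lra. Qed.

Lemma grid_bounds L N m : 0 < L -> (0 < N)%nat -> (m <= N)%nat -> 0 <= gridpt L N m <= L.
Proof. intros HL HN Hm. assert (0 < INR N) by (apply lt_0_INR; lia).
  assert (0 <= INR m) by apply pos_INR. assert (INR m <= INR N) by (apply le_INR; lia).
  unfold gridpt. split.
  - unfold Rdiv. apply Rmult_le_pos; [apply Rmult_le_pos; lra| left; apply Rinv_0_lt_compat; lra].
  - apply Rmult_le_reg_r with (INR N); [lra|]. unfold Rdiv.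
    rewrite Rmult_assoc, Rinv_l by lra. nra. Qed.

Lemma grid_0 L N : gridpt L N 0 = 0.
Proof. unfold gridpt; simpl; lra. Qed.

Lemma grid_N L N : (0 < N)%nat -> gridpt L N N = L.
Proof. intros HN. assert (0 < INR N) by (apply lt_0_INR; lia). unfold gridpt. field. lra. Qed.

Section Q.
End Q.

Lemma p_nonneg L phi N m : 0 < L -> (0 < N)%nat ->
  (forall x y, 0 <= x <= L -> 0 <= y <= L -> x <= y -> phi x <= phi y) ->
  (m < N)%nat -> 0 <= phi (gridpt L N (S m)) - phi (gridpt L N m).
Proof. intros HL HN Hmono Hm.
  assert (0 < INR N) by (apply lt_0_INR; lia).
  assert (0 <= L / INR N) by (unfold Rdiv; apply Rmult_le_pos; [lra| left; apply Rinv_0_lt_compat; lra]).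
  assert (phi (gridpt L N m) <= phi (gridpt L N (S m))); [|lra].
  apply Hmono; try (apply grid_bounds; auto; lia). rewrite grid_S by auto. lra. Qed.

Lemma p_sum L phi N : (0 < N)%nat -> phi 0 = 0 -> phi L = 1 ->
  rsum (fun m => phi (gridpt L N (S m)) - phi (gridpt L N m)) N = 1.
Proof. intros HN H0 H1. rewrite (rsum_tele (fun m => phi (gridpt L N m))).
  rewrite grid_N, grid_0 by auto. lra. Qed.

Lemma q_bound L C0 phi N x t : 0 < L -> (0 < N)%nat -> 0 <= C0 -> 0 <= t ->
  phi 0 = 0 -> phi L = 1 ->
  (forall x y, 0 <= x <= L -> 0 <= y <= L -> x <= y -> phi x <= phi y) ->
  (forall x y, 0 <= x <= L -> 0 <= y <= L -> Rabs (phi x - phi y) <= C0 * Rabs (x - y)) ->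
  1 - C0 * (2 * t + L / INR N) <=
  rsum (fun m => (phi (gridpt L N (S m)) - phi (gridpt L N m)) * indic t x (gridpt L N m)) N.
Proof. intros HL HN HC Ht H0 H1 Hmono Hlip.
  assert (HNr : 0 < INR N) by (apply lt_0_INR; lia).
  set (h := L / INR N).
  assert (Hh : 0 < h) by (unfold h, Rdiv; apply Rmult_lt_0_compat; [lra| apply Rinv_0_lt_compat; lra]).
  set (cl := fun y => Rmax (x - t) (Rmin y (x + t + h))).
  assert (Hterm : forall m, (m < N)%nat ->
    (phi (gridpt L N (S m)) - phi (gridpt L N m)) * (1 - indic t x (gridpt L N m))
    <= C0 * (cl (gridpt L N (S m)) - cl (gridpt L N m))).
  { intros m Hm. rewrite (grid_S L N m HN). fold h.
    set (a := gridpt L N m).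
    unfold indic. destruct Rle_dec as [r|r].
    - replace (1 - 1) with 0 by ring. rewrite Rmult_0_r. apply Rmult_le_pos; auto.
      unfold cl, Rmax, Rmin. repeat destruct Rle_dec; lra.
    - assert (Hc : cl (a + h) - cl a = h).
      { apply Rnot_le_lt in r. apply Rabs_def2 in r.
        unfold cl, Rmax, Rmin. repeat destruct Rle_dec; lra. }
      rewrite Hc. replace (1 - 0) with 1 by ring. rewrite Rmult_1_r.
      assert (Hl := Hlip (a + h) a).
      assert (0 <= a <= L) by (apply grid_bounds; auto; lia).
      assert (0 <= a + h <= L).
      { unfold a, h; rewrite <- grid_S by auto. apply grid_bounds; auto. }
      specialize (Hl ltac:(auto) ltac:(auto)).
      replace (a + h - a) with h in Hl by ring. rewrite (Rabs_pos_eq h) in Hl by lra.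
      assert (Hr := Rle_abs (phi (a + h) - phi a)). lra. }
  apply rsum_le in Hterm. rewrite rsum_scal in Hterm.
  rewrite (rsum_tele (fun m => cl (gridpt L N m))) in Hterm.
  rewrite grid_N, grid_0 in Hterm by auto.
  assert (cl L - cl 0 <= 2 * t + h) by (unfold cl, Rmax, Rmin; repeat destruct Rle_dec; lra).
  assert (C0 * (cl L - cl 0) <= C0 * (2 * t + h)) by (apply Rmult_le_compat_l; auto).
  rewrite (rsum_ext _ (fun m => (phi (gridpt L N (S m)) - phi (gridpt L N m)) -
     (phi (gridpt L N (S m)) - phi (gridpt L N m)) * indic t x (gridpt L N m))) in Hterm
    by (intros; ring).
  rewrite rsum_minus, p_sum in Hterm by auto. lra. Qed.

Lemma div_nonneg a b : 0 <= a -> 0 < b -> 0 <= a / b.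
Proof. intros. unfold Rdiv. apply Rmult_le_pos; [lra| left; apply Rinv_0_lt_compat; lra]. Qed.

Lemma tele_sum k P : 
  (1 - 1 / INR (S P)) ^ (S k) <=
  (INR k + 1) / INR (S P) * rsum (fun m => (1 - INR (S m) / INR (S P)) ^ k) P.
Proof.
  assert (HP : 0 < INR (S P)) by (apply lt_0_INR; lia).
  set (F := fun m => (1 - INR (S m) / INR (S P)) ^ (S k)).
  assert (Ht := rsum_tele' F P).
  assert (HF0 : F O = (1 - 1 / INR (S P)) ^ (S k)) by (unfold F; simpl INR; reflexivity).
  assert (HFP : F P = 0).
  { unfold F. replace (1 - INR (S P) / INR (S P)) with 0 by (field; lra). simpl; ring. }
  assert (Hle : rsum (fun m => F m - F (S m)) P <=
    rsum (fun m => (INR k + 1) / INR (S P) * (1 - INR (S m) / INR (S P)) ^ k) P).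
  { apply rsum_le; intros m Hm. unfold F.
    assert (INR (S (S m)) <= INR (S P)) by (apply le_INR; lia).
    assert (0 <= INR (S m)) by apply pos_INR.
    assert (Hpd := pow_diff (1 - INR (S m) / INR (S P)) (1 - INR (S (S m)) / INR (S P)) k).
    replace (1 - INR (S m) / INR (S P) - (1 - INR (S (S m)) / INR (S P))) with (1 / INR (S P)) in Hpd
      by (rewrite (S_INR (S m)); field; lra).
    rewrite (S_INR k) in Hpd.
    assert (0 <= 1 - INR (S (S m)) / INR (S P)).
    { apply Rmult_le_reg_r with (INR (S P)); auto. unfold Rdiv.
      rewrite Rmult_minus_distr_r, Rmult_assoc, Rinv_l by lra. lra. }
    assert (INR (S (S m)) / INR (S P) >= INR (S m) / INR (S P)).
    { rewrite (S_INR (S m)). unfold Rdiv. rewrite Rmult_plus_distr_r.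
      assert (0 < / INR (S P)) by (apply Rinv_0_lt_compat; lra). lra. }
    eapply Rle_trans; [apply Hpd; lra|]. right; field; lra. }
  rewrite rsum_scal in Hle. lra. Qed.

Lemma key L C0 phi k x n P : 0 < L -> 0 < C0 -> (1 <= k)%nat ->
  phi 0 = 0 -> phi L = 1 ->
  (forall x y, 0 <= x <= L -> 0 <= y <= L -> x <= y -> phi x <= phi y) ->
  (forall x y, 0 <= x <= L -> 0 <= y <= L -> Rabs (phi x - phi y) <= C0 * Rabs (x - y)) ->
  1 / (2 * C0) / (INR k + 1) * (1 - 1 / INR (S P)) ^ (S k) - INR k * L / 2 / INR (S n)
  <= stieltjes_sum L phi (S n) k (Ymin x).
Proof. intros HL HC Hk H0 H1 Hmono Hlip.
  set (N := S n). assert (HN : (0 < N)%nat) by (unfold N; lia).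
  assert (HNr : 0 < INR N) by (apply lt_0_INR; lia).
  assert (HP : 0 < INR (S P)) by (apply lt_0_INR; lia).
  set (d := 1 / (2 * C0 * INR (S P))).
  assert (Hd : 0 < d) by (unfold d; apply Rdiv_lt_0_compat; [lra| apply Rmult_lt_0_compat; lra]).
  set (p := fun m => phi (gridpt L N (S m)) - phi (gridpt L N m)).
  set (q := fun m => rsum (fun j => p j * indic (INR (S m) * d) x (gridpt L N j)) N).
  set (h := L / INR N).
  assert (Hh : 0 < h) by (unfold h; apply Rdiv_lt_0_compat; lra).
  assert (S1 : d * rsum (fun m => q m ^ k) P <= stieltjes_sum L phi N k (Ymin x)).
  { rewrite (rsum_ext _ (fun m => stieltjes_sum L phi N k (prodl (indic (INR (S m) * d) x)))).
    2:{ intros m _. rewrite ss_prod. reflexivity. }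
    rewrite <- ss_rsum, <- ss_scal. apply ss_mono.
    - intros; apply p_nonneg; auto.
    - intros l Hl. apply Ymin_lb; auto. intros ->. simpl in Hl. lia. }
  set (am := fun m => 1 - INR (S m) / INR (S P)).
  assert (S2 : forall m, (m < P)%nat -> am m ^ k - INR k * (C0 * h) <= q m ^ k).
  { intros m Hm. apply pow_lb; auto.
    - assert (INR (S m) <= INR (S P)) by (apply le_INR; lia).
      assert (0 <= INR (S m)) by apply pos_INR. unfold am. split.
      + apply Rmult_le_reg_r with (INR (S P)); auto. unfold Rdiv.
        rewrite Rmult_minus_distr_r, Rmult_assoc, Rinv_l by lra. lra.
      + assert (0 <= INR (S m) / INR (S P)) by (apply div_nonneg; lra). lra.
    - apply Rmult_le_pos; lra.
    - unfold q. apply rsum_nonneg. intros j Hj. apply Rmult_le_pos.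
      apply p_nonneg; auto. unfold indic; destruct Rle_dec; lra.
    - assert (Hq := q_bound L C0 phi N x (INR (S m) * d) HL HN ltac:(lra)
        ltac:(apply Rmult_le_pos; [apply pos_INR| lra]) H0 H1 Hmono Hlip).
      fold h in Hq. unfold q, p; cbv beta.
      rewrite Rmult_plus_distr_l in Hq.
      replace (am m) with (1 - C0 * (2 * (INR (S m) * d))).
      + lra.
      + unfold am, d. field. lra. }
  apply rsum_le in S2. rewrite rsum_minus, rsum_const in S2.
  assert (S4 := tele_sum k P). fold am in S4.
  set (Rs := rsum (fun m => am m ^ k) P) in *.
  set (W := (1 - 1 / INR (S P)) ^ S k) in *.
  assert (HPP : INR P <= INR (S P)) by (apply le_INR; lia).
  assert (HP0 : 0 <= INR P) by apply pos_INR.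
  assert (Hk0 : 0 <= INR k) by apply pos_INR.
  assert (A1 : d * (Rs - INR P * (INR k * (C0 * h))) <= d * rsum (fun m => q m ^ k) P)
    by (apply Rmult_le_compat_l; lra).
  assert (A2 : 1 / (2 * C0) / (INR k + 1) * W <= d * Rs).
  { unfold d. replace (1 / (2 * C0 * INR (S P)) * Rs) with (1 / (2 * C0) / (INR k + 1) * ((INR k + 1) / INR (S P) * Rs)) by (field; lra).
    apply Rmult_le_compat_l; auto.
    apply Rmult_le_pos; [apply div_nonneg; lra|]. left; apply Rinv_0_lt_compat; lra. }
  assert (A3 : d * (INR P * (INR k * (C0 * h))) <= INR k * L / 2 / INR N).
  { unfold d, h. replace (1 / (2 * C0 * INR (S P)) * (INR P * (INR k * (C0 * (L / INR N)))))
      with (INR P / INR (S P) * (INR k * L / 2 / INR N)) by (field; lra).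
    rewrite <- (Rmult_1_l (INR k * L / 2 / INR N)) at 2.
    apply Rmult_le_compat_r.
    - apply div_nonneg; [|lra]. apply Rmult_le_pos; [apply Rmult_le_pos|]; lra.
    - apply Rmult_le_reg_r with (INR (S P)); auto. unfold Rdiv.
      rewrite Rmult_assoc, Rinv_l by lra. lra. }
  fold N. lra. Qed.

Theorem mainTheorem11 (L C0 : R) (phi : R -> R) (k : nat) (EY : R -> R) :
  0 < L ->
  (1 <= k)%nat ->
  phi 0 = 0 -> phi L = 1 ->
  (forall x y, 0 <= x <= L -> 0 <= y <= L -> x <= y -> phi x <= phi y) ->
  (forall x y, 0 <= x <= L -> 0 <= y <= L ->
     Rabs (phi x - phi y) <= C0 * Rabs (x - y)) ->
  (forall x, 0 <= x <= L -> Un_cv (iid_expect_seq L phi k (Ymin x)) (EY x)) ->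
  forall x, 0 <= x <= L -> EY x >= 1 / (2 * C0 * (INR k + 1)).
Proof.
  intros HL Hk H0 H1 Hmono Hlip Hcv x Hx.
  assert (HC : 0 < C0).
  { assert (Hl := Hlip L 0 ltac:(lra) ltac:(lra)). rewrite H0, H1 in Hl.
    rewrite Rminus_0_r, Rminus_0_r, Rabs_R1, Rabs_pos_eq in Hl by lra. nra. }
  assert (Hk0 : 0 <= INR k) by apply pos_INR.
  set (c := 1 / (2 * C0)).
  assert (Hc : 0 < c) by (unfold c; apply Rdiv_lt_0_compat; lra).
  assert (HB : forall P, c / (INR k + 1) * (1 - 1 / INR (S P)) ^ (S k) <= EY x).
  { intros P. apply (lb_lim (iid_expect_seq L phi k (Ymin x)) (EY x) _ (INR k * L / 2)).
    - apply Hcv; auto.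
    - apply div_nonneg; [apply Rmult_le_pos|]; lra.
    - intros n. unfold iid_expect_seq. apply key; auto. }
  assert (HB2 : forall P, c / (INR k + 1) - c / INR (S P) <= EY x).
  { intros P. eapply Rle_trans; [|apply (HB P)].
    assert (HP : 0 < INR (S P)) by (apply lt_0_INR; lia).
    assert (HPd : 1 / INR (S P) <= 1).
    { apply Rmult_le_reg_r with (INR (S P)); auto. unfold Rdiv.
      rewrite Rmult_assoc, Rinv_l by lra. assert (1 <= INR (S P)) by (apply (le_INR 1); lia). lra. }
    assert (0 <= 1 / INR (S P)) by (apply div_nonneg; lra).
    assert (Hpd := pow_diff 1 (1 - 1 / INR (S P)) k ltac:(lra)).
    rewrite !pow1, (S_INR k) in Hpd.
    replace (1 - (1 - 1 / INR (S P))) with (1 / INR (S P)) in Hpd by ring.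
    assert (Hi : 0 < c / (INR k + 1)) by (apply Rdiv_lt_0_compat; lra).
    assert (H2 : c / (INR k + 1) * (1 - (INR k + 1) * 1 * (1 / INR (S P))) <=
            c / (INR k + 1) * (1 - 1 / INR (S P)) ^ S k)
      by (apply Rmult_le_compat_l; lra).
    replace (c / (INR k + 1) * (1 - (INR k + 1) * 1 * (1 / INR (S P)))) with
      (c / (INR k + 1) - c / INR (S P)) in H2 by (field; lra). lra. }
  assert (Hconst : Un_cv (fun _ => EY x) (EY x)).
  { intros e He. exists O. intros n _. unfold R_dist. rewrite Rminus_diag, Rabs_R0. lra. }
  assert (c / (INR k + 1) <= EY x) by (apply (lb_lim _ _ _ c Hconst); [lra| intros n; apply HB2]).
  replace (1 / (2 * C0 * (INR k + 1))) with (c / (INR k + 1)) by (unfold c; field; lra).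
  lra.
Qed.
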